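(* Let $P$ be a finite non-abelian $p$-group, $p$ a prime. Then $P$ is exponent-critical and has more than one abelian maximal subgroup (i.e. $P$ is of type $\mathcal{B}$) if and only if $P$ is $2$-generated and its derived subgroup $P'$ has order $p$.
   Context: A finite group $G$ is exponent-critical if $\exp(G)$ is not the least common multiple of the exponents of the proper non-abelian subgroups of $G$. An exponent-critical $p$-group is said to be of type $\mathcal{B}$ if it has more than one abelian maximal subgroup. *)

(* Defs.v *)
From mathcomp Require Import all_boot all_fingroup all_solvable.
Set Implicit Arguments. Unset Strict Implicit. Unset Printing Implicit Defensive.
Local Open Scope group_scope.

Definition lcm_exp_proper_nonabelian (gT : finGroupType) (G : {group gT}) : nat :=
  \big[lcmn/1%N]_(H : {group gT} | (H \proper G) && ~~ abelian H) exponent H.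

Definition exponent_critical (gT : finGroupType) (G : {group gT}) : Prop :=
  exponent G <> lcm_exp_proper_nonabelian G.

Definition n_abelian_maximal (gT : finGroupType) (G : {group gT}) : nat :=
  #|[set M : {group gT} | maximal M G && abelian M]|.

Definition type_B (gT : finGroupType) (G : {group gT}) : Prop :=
  exponent_critical G /\ (1 < n_abelian_maximal G)%N.

Definition two_generated (gT : finGroupType) (G : {group gT}) : Prop :=
  exists x y : gT, (G : {set gT}) = <<[set x; y]>>.

(* Main.v *)
Require Import Defs.
From mathcomp Require Import all_boot all_fingroup all_solvable.
Set Implicit Arguments. Unset Strict Implicit. Unset Printing Implicit Defensive.
Local Open Scope group_scope.

Section Helpers.
Variable gT : finGroupType.
Implicit Types P K H M : {group gT}.



Lemma not2gen_lcm P : nilpotent P -> ~~ abelian P ->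
  (forall u v : gT, P :!=: <<[set u; v]>>) ->
  exponent P = lcm_exp_proper_nonabelian P.
Proof.
move=> nilP nabP n2g.
set L := lcm_exp_proper_nonabelian P.
have key : forall u v, u \in P -> v \in P -> ~~ (u \in 'C[v]) ->
    #[u] %| L /\ #[v] %| L.
  move=> u v Pu Pv ncuv.
  have sHP : <<[set u; v]>> \subset P.
    by rewrite gen_subG; apply/subsetP => w; rewrite !inE => /orP[]/eqP->.
  have eH : exponent <<[set u; v]>>%G %| L.
    apply: (biglcmn_sup <<[set u; v]>>%G) => //.
    rewrite properEneq sHP andbT eq_sym n2g /=.
    apply: contra ncuv => cH; apply/cent1P.
    by apply: (centsP cH); rewrite mem_gen // ?set21 ?set22.
  split; apply: dvdn_trans eH; apply: dvdn_exponent; rewrite mem_gen //.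
    exact: set21.
  exact: set22.
apply/eqP; rewrite eqn_dvd; apply/andP; split; last first.
  apply/dvdn_biglcmP => H /andP[/proper_sub sHP _]; exact: exponentS.
have [g Pg ->] := exponent_witness nilP.
have [a Pa naC] : exists2 a, a \in P & a \notin 'C(P).
  by apply/subsetPn; rewrite -abelianE.
have [b Pb nab] : exists2 b, b \in P & b \notin 'C[a].
  apply/subsetPn; apply: contra naC => sPC; apply/centP => w Pw.
  by apply/esym/cent1P; apply: (subsetP sPC).
case: (boolP (g \in 'C(P))) => gC; last first.
  have [h Ph ngh] : exists2 h, h \in P & h \notin 'C[g].
    apply/subsetPn; apply: contra gC => sPC; apply/centP => w Pw.
    by apply/esym/cent1P; apply: (subsetP sPC).
  have := key h g Ph Pg ngh; case=> _ //.
have cgb : commute g b by apply: (centP gC).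
have cga : commute g a by apply: (centP gC).
have Pga : g * a \in P by rewrite groupM.
have ngab : b \notin 'C[g * a].
  apply: contra nab => /cent1P cb; apply/cent1P.
  have -> : a = g^-1 * (g * a) by rewrite mulKg.
  apply: commuteM; last exact: cb.
  by apply: commuteV; apply: commute_sym.
have [_ h1] := key b (g * a) Pb Pga ngab.
have [_ h2] := key b a Pb Pa nab.
rewrite order_dvdn.
have -> : g = (g * a) * a^-1 by rewrite mulgK.
rewrite expgMn; last first.
  apply: commuteV; apply: commute_sym; apply: commuteM; last exact: commute_refl.
  exact: commute_sym.
move: h1 h2; rewrite !order_dvdn => /eqP -> /eqP h2.
by rewrite expgVn h2 invg1 mulg1.
Qed.

Lemma L1 P K (x y : gT) (p : nat) : 0 < p ->
  P :=: <<[set x; y]>> -> K <| P -> P^`(1) \subset K ->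
  x ^+ p \in K -> y ^+ p \in K -> #|P : K| <= p * p.
Proof.
move=> p0 defP /andP[sKP nKP] sPK xpK ypK.
have Px : x \in P by rewrite defP mem_gen // set21.
have Py : y \in P by rewrite defP mem_gen // set22.
have Nx : x \in 'N(K) := subsetP nKP x Px.
have Ny : y \in 'N(K) := subsetP nKP y Py.
rewrite -card_quotient //.
have abPK : abelian (P / K) := sub_der1_abelian sPK.
set a := coset K x; set b := coset K y.
have Pa : a \in P / K by apply: mem_quotient.
have Pb : b \in P / K by apply: mem_quotient.
have -> : P / K = <[a]> * <[b]>.
  rewrite -cent_joinEl; last first.
    by apply: sub_abelian_cent2 abPK _ _; rewrite cycle_subG.
  rewrite defP quotient_gen; last by rewrite -gen_subG -defP.
  by rewrite quotientU !quotient_set1 // joing_idl joing_idr.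
have oa : #[a] <= p.
  apply: dvdn_leq => //; rewrite order_dvdn /a -morphX //= coset_id //.
have ob : #[b] <= p.
  apply: dvdn_leq => //; rewrite order_dvdn /b -morphX //= coset_id //.
apply: leq_trans (leq_mul oa ob).
have := mul_cardG <[a]> <[b]>.
rewrite /order => E.
rewrite E; apply: leq_pmulr; exact: cardG_gt0.
Qed.

End Helpers.

Unset Implicit Arguments.
Set Strict Implicit.
Set Printing Implicit Defensive.

Theorem theoremD (gT : finGroupType) (P : {group gT}) (p : nat) :
  prime p -> p.-group P -> ~~ abelian P ->
  (type_B P <-> two_generated P /\ #|P^`(1)| = p).
Proof.
move=> pr_p pP nabP.
have p_gt0 := prime_gt0 pr_p.
have nilP := pgroup_nil pP.
split.
- case=> ecrit card2.
  have [x [y defP]] : exists x y, P :=: <<[set x; y]>>.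
    case: (boolP [exists x, exists y, P :==: <<[set x; y]>>]).
      by case/existsP=> x /existsP [y /eqP e]; exists x, y.
    move=> neg; case: ecrit; apply: not2gen_lcm => // u v.
    apply: contra neg => e; apply/existsP; exists u; apply/existsP; by exists v.
  split; first by exists x, y.
  have [A [B [inA inB neAB]]] := card_gt1P card2.
  move: inA inB; rewrite !inE => /andP [maxA abA] /andP [maxB abB].
  have sPhiA := Phi_sub_max maxA.
  have sPhiB := Phi_sub_max maxB.
  have sAP := proper_sub (maxgroupp maxA).
  have sBP := proper_sub (maxgroupp maxB).
  have defAB : A <*> B = P.
    have sABP : A <*> B \subset P by rewrite join_subG sAP sBP.
    case: (boolP (A <*> B \proper P)) => [prop | nprop].
      have [_ mA] := maxgroupP maxA.
      have eA := mA _ prop (joing_subl A B).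
      have sBA : B \subset A by rewrite -eA joing_subr.
      have [_ mB] := maxgroupP maxB.
      have eAB := mB A (maxgroupp maxA) sBA.
      by case/eqP: neAB; apply: val_inj.
    apply/eqP; rewrite eqEsubset sABP /=.
    by move: nprop; rewrite properE sABP /= negbK.
  have sPhiZ : 'Phi(P) \subset 'Z(P).
    rewrite /center subsetI Phi_sub /= -{2}defAB centY subsetI.
    by rewrite (subset_trans sPhiA abA) (subset_trans sPhiB abB).
  have Px : x \in P by rewrite defP mem_gen // set21.
  have Py : y \in P by rewrite defP mem_gen // set22.
  have sDerZ : P^`(1) \subset 'Z(P).
    by apply: subset_trans sPhiZ; rewrite (Phi_joing pP) joing_subl.
  have powZ : forall g, g \in P -> g ^+ p \in 'Z(P).
    move=> g Pg; apply: (subsetP sPhiZ); rewrite (Phi_joing pP).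
    apply: (subsetP (joing_subr _ _)).
    by rewrite -[p]expn1; apply: Mho_p_elt => //; apply: mem_p_elt pP Pg.
  set c := [~ x, y].
  have cZ : c \in 'Z(P) by apply: (subsetP sDerZ); apply: mem_commg.
  have defP2 : P :=: <[x]> <*> <[y]> by rewrite joing_idl joing_idr.
  have derP : P^`(1) = <[c]>.
    rewrite defP2; apply: der1_joing_cycles.
    by rewrite -defP2; move/centerP: cZ => [_ ?]; apply/centP.
  rewrite derP -orderE.
  have cp : c ^+ p = 1.
    rewrite /c -commXg; last first.
      by apply: commute_sym; move/centerP: cZ => [_ cc]; apply: cc.
    apply/eqP/commgP; move/centerP: (powZ x Px) => [_ cc]; exact: cc.
  have : #[c] != 1%N.
    rewrite order_eq1; apply: contra nabP => /eqP c1.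
    by apply/derG1P; rewrite derP c1 cycle1.
  move=> nt; apply/(prime_nt_dvdP pr_p nt); by rewrite order_dvdn cp.
- case=> [[x [y defP]] cardD].
  have Px : x \in P by rewrite defP mem_gen // set21.
  have Py : y \in P by rewrite defP mem_gen // set22.
  have ntD : P^`(1) :!=: 1.
    by rewrite trivg_card1 cardD; apply: contraTneq (prime_gt1 pr_p) => ->.
  have sDZ : P^`(1) \subset 'Z(P).
    apply: prime_meetG; first by rewrite cardD.
    exact: meet_center_nil nilP (der_normal 1 P) ntD.
  have powZ : forall g, g \in P -> g ^+ p \in 'Z(P).
    move=> g Pg; apply/centerP; split; first by rewrite groupX.
    move=> h Ph; apply/commgP; rewrite commXg.
      by rewrite -cardD expg_cardG //; apply: mem_commg.
    move/centerP: (subsetP sDZ _ (mem_commg Pg Ph)) => [_ cc].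
    by apply: commute_sym; apply: cc.
  have sPhiZ : 'Phi(P) \subset 'Z(P).
    rewrite (Phi_joing pP) join_subG sDZ (MhoE 1 pP) gen_subG.
    by apply/subsetP => _ /imsetP [g Pg ->]; rewrite expn1; apply: powZ.
  have MhoPhi : forall g, g \in P -> g ^+ p \in 'Phi(P).
    move=> g Pg; rewrite (Phi_joing pP).
    apply: (subsetP (joing_subr _ _)).
    by rewrite -[p]expn1; apply: Mho_p_elt => //; apply: mem_p_elt pP Pg.
  have idx : #|P : 'Phi(P)| <= p * p.
    have sDPhi : P^`(1) \subset 'Phi(P) by rewrite (Phi_joing pP) joing_subl.
    exact: L1 defP (Phi_normal P) sDPhi (MhoPhi x Px) (MhoPhi y Py).
  have maxab : forall M : {group gT}, maximal M P -> abelian M.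
    move=> M maxM.
    have sMP := proper_sub (maxgroupp maxM).
    have sPhiM := Phi_sub_max maxM.
    apply: (@cyclic_factor_abelian _ 'Phi(P)).
      rewrite /center subsetI sPhiM /=.
      apply: subset_trans sPhiZ _; apply: subset_trans (subsetIr _ _) _.
      exact: centS.
    have iM := p_maximal_index pP maxM.
    have LI := Lagrange_index sMP sPhiM.
    have qeq : #|M / 'Phi(P)| = #|M : 'Phi(P)|.
      by apply: card_quotient; apply: subset_trans sMP (normal_norm (Phi_normal P)).
    have le : #|M / 'Phi(P)| <= p.
      have h : #|P : M| * #|M : 'Phi(P)| <= p * p by rewrite LI.
      by rewrite qeq -(leq_pmul2l p_gt0) -{1}iM.
    have pM : p.-group (M / 'Phi(P)) := quotient_pgroup _ (pgroupS sMP pP).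
    have E := card_pgroup pM.
    move: le; rewrite E.
    case: (logn p _) E => [|[|k]] E le.
    + have t : M / 'Phi(P) :==: 1 by rewrite trivg_card1 E.
      by rewrite (eqP t) cyclic1.
    + by apply: prime_cyclic; rewrite E expn1.
    + by rewrite -{2}(expn1 p) leq_exp2l ?prime_gt1 in le.
  have propab : forall H : {group gT}, H \proper P -> abelian H.
    move=> H prH.
    have [eH | [M maxM sHM]] := maximal_exists (proper_sub prH).
      by move: prH; rewrite eH properE subxx.
    exact: abelianS sHM (maxab M maxM).
  split.
    rewrite /exponent_critical /lcm_exp_proper_nonabelian big_pred0; last first.
      move=> H /=; apply/negP => /andP [prH nab].
      by move: nab; rewrite propab.
    move=> e1; move: nabP; have : P :==: 1 by rewrite trivg_exponent e1.
    by move/eqP ->; rewrite abelian1.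
  have sX : <[x]> \subset P by rewrite cycle_subG.
  have sY : <[y]> \subset P by rewrite cycle_subG.
  have [eX | [M1 maxM1 sXM1]] := maximal_exists sX.
    by move: nabP; rewrite -eX cycle_abelian.
  have [eY | [M2 maxM2 sYM2]] := maximal_exists sY.
    by move: nabP; rewrite -eY cycle_abelian.
  apply/card_gt1P; exists M1, M2; split; rewrite ?inE ?maxM1 ?maxM2 ?maxab //.
  apply/eqP => e; move: sYM2; rewrite -e => sYM1.
  have : P \subset M1.
    rewrite defP gen_subG; apply/subsetP => w; rewrite !inE.
    case/orP => /eqP ->; [move: sXM1 | move: sYM1]; by rewrite cycle_subG.
  by move: (maxgroupp maxM1); rewrite properE => /andP [_ /negP].
Qed.
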